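(* Let $K\ge1$ and $\gamma\in(0,1]$. For each $i\in[K]$ let $E_i$ be a nonnegative random variable with $\mathbb E[E_i]\le1$ when the $i$-th null hypothesis is true. Consider the following sequential procedure: for $t=1,\dots,K$, an index $I_t$ not previously selected is chosen, a current proxy $F^{(t)}_{I_t}\ge0$ is formed (an arbitrary nonnegative random variable, which may depend on initial proxies, on previous indicators $T_{I_1},\dots,T_{I_{t-1}}$, and on previously queried values $E_{I_s}$ with $s<t$, $T_{I_s}=1$), then $T_{I_t}$ is drawn, using fresh independent randomness, with $T_{I_t}\sim\mathrm{Bern}\big((1-\gamma(F^{(t)}_{I_t})^{-1})_+\big)$ given everything observed so far and all $E_j$, and one sets $\tilde E_{I_t}:=F^{(t)}_{I_t}$ if $T_{I_t}=0$ and $\tilde E_{I_t}:=(1-\gamma)E_{I_t}$ if $T_{I_t}=1$ (in which case $E_{I_t}$ is queried). Then each resulting $\tilde E_i$, $i\in[K]$, is a valid e-value: $\tilde E_i\ge0$ and $\mathbb E[\tilde E_i]\le1$ when the $i$-th null is true.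
   Context: $x_+=\max(x,0)$, with $(1-\gamma F^{-1})_+=0$ when $F=0$. *)

(* Defs.v *)
From mathcomp Require Import all_boot all_order all_algebra.
From mathcomp Require Import all_classical all_reals all_analysis.
Set Implicit Arguments. Unset Strict Implicit. Unset Printing Implicit Defensive.
Import Order.TTheory GRing.Theory Num.Theory.
Local Open Scope ring_scope.

Definition bern_prob (R : realType) (gamma F : R) : R :=
  if F == 0 then 0 else Num.max 0 (1 - gamma / F).

(* Resulting e-value for hypothesis i: at the (unique) step t with I_t = i,
   tilde E_i = (1 - gamma) E_i if T_{I_t} = 1, and F^{(t)}_{I_t} otherwise.
   Steps are indexed by t : 'I_K (t = 0 .. K-1 stands for 1 .. K). *)
Definition etilde (R : realType) (Omega : Type) (K : nat) (gamma : R)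
  (E : 'I_K -> Omega -> R) (I : 'I_K -> Omega -> 'I_K)
  (F : 'I_K -> Omega -> R) (T : 'I_K -> Omega -> bool)
  (i : 'I_K) (w : Omega) : R :=
  \sum_(t < K | I t w == i) (if T t w then (1 - gamma) * E i w else F t w).

(* Main.v *)
Require Import Defs.
From mathcomp Require Import all_boot all_order all_algebra.
From mathcomp Require Import all_classical all_reals all_analysis.
From mathcomp Require Import measurable_realfun lra.
Import Order.TTheory GRing.Theory Num.Theory numFieldNormedType.Exports.
Local Open Scope classical_set_scope.
Local Open Scope ring_scope.
Import HBNNSimple.

Lemma measurable_bern (R : realType) (gamma : R) :
  measurable_fun setT (bern_prob gamma).
Proof.
rewrite /bern_prob.
apply: (@measurable_fun_if _ _ R R (cst 0) (fun x : R => Num.max 0 (1 - gamma / x)) _ measurableT (fun x : R => x == 0)).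
- apply: measurable_realfun.measurable_fun_eqr => //; exact: measurable_cst.
- exact: measurable_cst.
- have -> : [set: R] `&` (fun x : R => x == 0) @^-1` [set false] = ~` [set 0].
    apply/seteqP; split => x /=; first by move=> [_ /negbT /eqP].
    by move=> /eqP /negbTE.
  apply: measurable_realfun.open_continuous_measurable_fun.
    apply: closed_openC; apply: compact_closed; [exact: Rhausdorff|exact: compact_set1].
  move=> x; rewrite inE /= => /eqP x0.
  apply: (@continuous_max _ _ (cst 0) (fun x : R => 1 - gamma / x) x); first exact: cst_continuous.
  apply: continuousD; first exact: cst_continuous.
  apply: continuousN.
  apply: continuousM; first exact: cst_continuous.
  exact: inv_continuous.
Qed.

Lemma dens (R : realType) d (Om : measurableType d) dX (X : measurableType dX)
 (nu mu : {measure set Om -> \bar R}) (D : set Om) (mD : measurable D) (H : Om -> X) (mH : measurable_fun setT H)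
 (rho : Om -> R) (rho0 : forall w, 0 <= rho w) (mrho : measurable_fun setT rho)
 (hnu : forall B, measurable B -> nu (H @^-1` B `&` D) = (\int[mu]_(w in H @^-1` B) (rho w)%:E)%E)
 (g : X -> R) (g0 : forall x, 0 <= g x) (mg : measurable_fun setT g) :
 (\int[nu]_(w in D) (g (H w))%:E = \int[mu]_w ((g (H w))%:E * (rho w)%:E))%E.
Proof.
have mEg : measurable_fun [set: X] (fun x => (g x)%:E) by exact/measurable_EFinP.
pose h := nnsfun_approx measurableT mEg.
have hcvg x : (EFin \o (h ^~ x)) @ \oo --> (g x)%:E.
  by apply: cvg_nnsfun_approx => // y _; rewrite lee_fin.
have hnd := @nd_nnsfun_approx _ _ _ _ measurableT _ mEg.
have mhH n : measurable_fun setT (fun w => (h n (H w))%:E).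
  by apply/measurable_EFinP; apply: measurableT_comp => //.
transitivity (limn (fun n => \int[nu]_(w in D) (h n (H w))%:E))%E.
  have mhD n : measurable_fun D (fun w => (h n (H w))%:E) by exact: measurable_funTS.
  rewrite -monotone_convergence//.
  - apply: eq_integral => w _; apply/esym/cvg_lim => //; exact: hcvg.
  - by move=> n w _; rewrite lee_fin.
  - by move=> w _ m n mn; rewrite lee_fin; exact/lefP/hnd.
transitivity (limn (fun n => \int[mu]_w ((h n (H w))%:E * (rho w)%:E)))%E; last first.
  rewrite -monotone_convergence//.
  - apply: eq_integral => w _; apply/cvg_lim => //.
    by apply: cvgeZr => //; exact: hcvg.
  - by move=> n; apply: emeasurable_funM => //; exact/measurable_EFinP.
  - by move=> n w _; rewrite mule_ge0// lee_fin.
  - by move=> w _ m n mn; rewrite lee_wpmul2r ?lee_fin//; exact/lefP/hnd.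
congr (limn _); apply/funext => n.
set hn := h n.
have mA y : measurable (H @^-1` (hn @^-1` [set y])).
  rewrite -[X in measurable X]setTI; apply: mH => //.
have mi y : measurable_fun setT (fun w => (y * \1_(H @^-1` (hn @^-1` [set y])) w)%:E).
  apply/measurable_EFinP; apply: measurable_funM; first exact: measurable_cst.
  exact: measurable_indic.
have i0 y w : (0 <= (y * \1_(H @^-1` (hn @^-1` [set y])) w)%:E)%E.
  rewrite EFinM; exact: (nnfun_muleindic_ge0 hn y (H w)).
transitivity (\int[nu]_(w in D) (\sum_(y \in range hn) (y * \1_(H @^-1` (hn @^-1` [set y])) w)%:E))%E.
  by apply: eq_integral => w _; rewrite fimfunE fsumEFin.
transitivity (\int[mu]_w (\sum_(y \in range hn) ((y * \1_(H @^-1` (hn @^-1` [set y])) w)%:E * (rho w)%:E)))%E; last first.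
  apply: eq_integral => w _; rewrite -ge0_mule_fsuml//.
  by rewrite fsumEFin// -fimfunE.
have miD y : measurable_fun D (fun w => (y * \1_(H @^-1` (hn @^-1` [set y])) w)%:E).
  exact: measurable_funTS.
rewrite ge0_integral_fsum//.
rewrite ge0_integral_fsum//; last 2 first.
  - by move=> y; apply: emeasurable_funM => //; exact/measurable_EFinP.
  - by move=> y w _; rewrite mule_ge0// lee_fin.
apply: eq_fsbigr => y _.
have [y0|y0] := ltP y 0.
  have -> : H @^-1` (hn @^-1` [set y]) = set0.
    by rewrite preimage_nnfun0// preimage_set0.
  rewrite !indic0; under eq_integral do rewrite mulr0.
  by under [RHS]eq_integral do rewrite mulr0 mul0e; rewrite !integral0.
under eq_integral do rewrite EFinM.
rewrite ge0_integralZl//; last first.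
  by apply/measurable_EFinP; exact: measurable_indic.
under [RHS]eq_integral do rewrite EFinM -muleA.
rewrite ge0_integralZl//; first last.
  - by move=> w _; rewrite mule_ge0// lee_fin.
  - apply: emeasurable_funM; last exact/measurable_EFinP.
    by apply/measurable_EFinP; exact: measurable_indic.
congr (_ * _)%E.
rewrite integral_indic// hnu//.
rewrite -[in LHS](setTI (H @^-1` _)) __deprecated__integral_setI_indic//.
by apply: eq_integral => w _; rewrite muleC.
Qed.


Lemma bern_bound (R : realType) (gamma F : R) : 0 < gamma -> 0 <= F ->
  F * (1 - bern_prob gamma F) <= gamma /\ 0 <= bern_prob gamma F <= 1.
Proof.
move=> g0 F0; rewrite /bern_prob; case: eqP => [->|/eqP Fn0].
  by rewrite mul0r ltW //= lexx ler01.
have Fp : 0 < F by rewrite lt_neqAle eq_sym Fn0.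
have gF : 0 <= gamma / F by rewrite divr_ge0 // ltW.
rewrite maxEle; case: ifPn => h; last first.
  rewrite -ltNge in h.
  rewrite subr0 mulr1 lexx ler01; split => //.
  have : 1 <= gamma / F by lra.
  by rewrite ler_pdivlMr // mul1r.
split; last by rewrite h /=; lra.
by rewrite opprB addrC subrK mulrC divfK.
Qed.

Theorem proposition8 (R : realType) (d : measure_display) (Omega : measurableType d)
  (P : probability Omega R) (K : nat) (hK : (0 < K)%N) (gamma : R)
  (hg0 : 0 < gamma) (hg1 : gamma <= 1)
  (Null : {set 'I_K})
  (E : 'I_K -> Omega -> R)
  (hEm : forall j, measurable_fun setT (E j))
  (hE0 : forall j w, 0 <= E j w)
  (hEnull : forall j, j \in Null -> (\int[P]_w (E j w)%:E <= 1)%E)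
  (* the procedure: step t selects index I t, forms proxy F t, draws indicator T t *)
  (I : 'I_K -> Omega -> 'I_K) (F : 'I_K -> Omega -> R) (T : 'I_K -> Omega -> bool)
  (hInew : forall w, injective (fun t => I t w))
  (hF0 : forall t w, 0 <= F t w)
  (hTm : forall t, measurable [set w | T t w])
  (* H t : everything observed before drawing T t (together with all E_j) *)
  (dX : measure_display) (X : measurableType dX) (H : 'I_K -> Omega -> X)
  (hHm : forall t, measurable_fun setT (H t))
  (hHE : forall t j, exists e : X -> R, measurable_fun setT e /\ E j = e \o H t)
  (hHF : forall t, exists f : X -> R, measurable_fun setT f /\ F t = f \o H t)
  (hHI : forall t, exists iota : X -> 'I_K,
           (forall i, measurable (iota @^-1` [set i])) /\ I t = iota \o H t)
  (hHT : forall t s : 'I_K, (s < t)%N -> exists tau : X -> bool,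
           measurable (tau @^-1` [set true]) /\ T s = tau \o H t)
  (* conditional law: T t ~ Bern((1 - gamma / F t)_+) given H t *)
  (hTcond : forall t (A : set X), measurable A ->
     P (H t @^-1` A `&` [set w | T t w]) =
     (\int[P]_(w in H t @^-1` A) (bern_prob gamma (F t w))%:E)%E) :
  forall i, (forall w, 0 <= etilde gamma E I F T i w) /\
    (i \in Null -> (\int[P]_w (etilde gamma E I F T i w)%:E <= 1)%E).
Proof.
move=> i.
have uniq w : exists t0, forall t, (I t w == i) = (t == t0).
  have [gi gK Kg] := injF_bij (hInew w).
  exists (gi i) => t; rewrite -{1}(Kg i).
  exact: (inj_eq (hInew w)).
have key w : exists t0, I t0 w = i /\ etilde gamma E I F T i w =
    (if T t0 w then (1 - gamma) * E i w else F t0 w).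
  have [t0 Ht0] := uniq w; exists t0; split; first by apply/eqP; rewrite Ht0.
  by rewrite /etilde (big_pred1 t0).
have e0 w : 0 <= etilde gamma E I F T i w.
  have [t0 [_ ->]] := key w; case: (T t0 w) => //.
  by apply: mulr_ge0; [rewrite subr_ge0|].
split => // iN.
have mT t : measurable_fun setT (T t).
  by apply: (measurable_fun_bool true); rewrite setTI; exact: hTm.
have mIi t : measurable_fun setT (fun w => I t w == i).
  have [iota [miota Ie]] := hHI t; rewrite Ie.
  apply: (measurable_fun_bool true).
  have -> : setT `&` (fun w => (iota \o H t) w == i) @^-1` [set true] =
      H t @^-1` (iota @^-1` [set i]).
    by apply/seteqP; split => w /=; [case=> _ /eqP|move=> ->; split=> //; rewrite eqxx].
  rewrite -[X in measurable X]setTI; exact: hHm.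
have mF t : measurable_fun setT (F t).
  by have [f [mf ->]] := hHF t; exact: measurableT_comp.
have mE := hEm i.
pose G t w := if (I t w == i) && ~~ T t w then F t w else 0.
pose a t w : R := (I t w == i)%:R.
have G0 t w : 0 <= G t w by rewrite /G; case: ifP.
have mG t : measurable_fun setT (G t).
  apply: (@measurable_fun_ifT _ _ _ _ (F t) (cst 0)); [|exact: mF|exact: measurable_cst].
  apply: measurable_and => //.
  apply: (measurable_fun_bool true); rewrite setTI.
  have -> : (fun w => ~~ T t w) @^-1` [set true] = ~` [set w | T t w].
    by apply/seteqP; split => w /=; case: (T t w).
  exact/measurableC/hTm.
have ma t : measurable_fun setT (a t).
  have -> : a t = fun w => if I t w == i then 1 else 0.
    by apply/funext => w; rewrite /a; case: eqP.
  by apply: measurable_fun_ifT => //; exact: measurable_cst.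
have met : measurable_fun setT (fun w => (etilde gamma E I F T i w)%:E).
  apply/measurable_EFinP; rewrite /etilde.
  have -> : (fun w => \sum_(t < K | I t w == i) (if T t w then (1 - gamma) * E i w else F t w)) =
     (fun w => \sum_(t < K) (if I t w == i then (if T t w then (1 - gamma) * E i w else F t w) else 0)).
    by apply/funext => w; rewrite big_mkcond.
  apply: measurable_sum => t.
  apply: (@measurable_fun_ifT _ _ _ _ (fun w => if T t w then (1 - gamma) * E i w else F t w) (cst 0)); [exact: mIi| |exact: measurable_cst].
  apply: (@measurable_fun_ifT _ _ _ _ (fun w => (1 - gamma) * E i w) (F t)); [exact: mT| |exact: mF].
  by apply: measurable_funM => //; exact: measurable_cst.
have kt t : (\int[P]_w (G t w)%:E <= \int[P]_w (gamma * a t w)%:E)%E.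
  have [iota [miota Ie]] := hHI t.
  have [f [mf Fe]] := hHF t.
  pose gg x := \1_(iota @^-1` [set i]) x * Num.max 0 (f x).
  have gg0 x : 0 <= gg x.
    by rewrite /gg; apply: mulr_ge0; [rewrite indicE ler0n|rewrite le_max lexx].
  have mgg : measurable_fun setT gg.
    apply: measurable_funM; first exact: measurable_indic.
    by apply: measurable_maxr => //; exact: measurable_cst.
  pose N := [set w | ~~ T t w].
  have mN : measurable N.
    have -> : N = ~` [set w | T t w].
      by apply/seteqP; split => w /=; rewrite /N /=; case: (T t w).
    exact/measurableC/hTm.
  have GE w : (G t w)%:E = ((gg (H t w))%:E * (\1_N w)%:E)%E.
    rewrite -EFinM; congr EFin; rewrite /G /gg /N !indicE Ie Fe /=.
    have Fw0 : 0 <= f (H t w) by have := hF0 t w; rewrite Fe.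
    have [h1|h1] := eqVneq (iota (H t w)) i; case hT: (T t w) => /=.
    - by rewrite (@memNset _ [set w0 | ~~ T t w0]) /= ?hT // mulr0.
    - rewrite (@mem_set _ [set w0 | ~~ T t w0]) /= ?hT //.
      by rewrite mem_set // mul1r mulr1 max_r.
    - by rewrite (@memNset _ (iota @^-1` [set i])) ?mul0r //= => /eqP; rewrite (negbTE h1).
    - by rewrite (@memNset _ (iota @^-1` [set i])) ?mul0r //= => /eqP; rewrite (negbTE h1).
  under eq_integral do rewrite GE.
  rewrite -__deprecated__integral_setI_indic // setTI.
  have rho0 w : 0 <= 1 - bern_prob gamma (F t w).
    by have [_ /andP[_ ?]] := @bern_bound _ _ _ hg0 (hF0 t w); rewrite subr_ge0.
  have mrho : measurable_fun setT (fun w => 1 - bern_prob gamma (F t w)).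
    apply: measurable_funB; first exact: measurable_cst.
    by apply: measurableT_comp; [exact: measurable_bern|exact: mF].
  have hnu B : measurable B -> P (H t @^-1` B `&` N) =
      (\int[P]_(w in H t @^-1` B) (1 - bern_prob gamma (F t w))%:E)%E.
    move=> mB.
    have mA : measurable (H t @^-1` B) by rewrite -[X in measurable X]setTI; exact: hHm.
    have -> : H t @^-1` B `&` N = H t @^-1` B `\` [set w | T t w].
      by apply/seteqP; split => w /=; rewrite /N /=; case: (T t w) => //= -[].
    rewrite measureD //; last by rewrite (le_lt_trans (probability_le1 _ mA)) // ltry.
    have hT := hTcond t B mB. rewrite [X in (_ - X)%E]hT.
    have hPA : P (H t @^-1` B) = (\int[P]_(w in H t @^-1` B) (bern_prob gamma (F t w))%:E +
         \int[P]_(w in H t @^-1` B) (1 - bern_prob gamma (F t w))%:E)%E.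
      rewrite -ge0_integralD //; last 4 first.
      - by move=> w _; rewrite lee_fin; have [_ /andP[]] := @bern_bound _ _ _ hg0 (hF0 t w).
      - apply/measurable_funTS/measurable_EFinP; apply: measurableT_comp; [exact: measurable_bern|exact: mF].
      - by move=> w _; rewrite lee_fin.
      - exact/measurable_funTS/measurable_EFinP.
      under eq_integral do rewrite -EFinD addrC subrK.
      by rewrite integral_cst // mul1e.
    rewrite [X in (X - _)%E]hPA addeC addeK //.
    by rewrite -(hTcond t B mB); apply: fin_num_measure; exact: measurableI.
  rewrite (@dens _ _ _ _ _ P P N mN (H t) (hHm t) _ rho0 mrho hnu gg gg0 mgg).
  apply: ge0_le_integral => //.
  - by move=> w _; rewrite mule_ge0 // lee_fin.
  - apply: emeasurable_funM; apply/measurable_EFinP; last exact: mrho.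
    exact: measurableT_comp mgg (hHm t).
  - by apply/measurable_EFinP; apply: measurable_funM => //; exact: measurable_cst.
  move=> w _; rewrite -EFinM lee_fin /gg /a Ie Fe /= indicE.
  have Fw0 : 0 <= f (H t w) by have := hF0 t w; rewrite Fe.
  have [h1|h1] := eqVneq (iota (H t w)) i.
    rewrite mem_set // mul1r mulr1 max_r //.
    by have [] := @bern_bound _ _ _ hg0 Fw0.
  rewrite memNset ?mul0r ?(negbTE h1) ?mulr0 //=.
  by move=> /eqP; rewrite (negbTE h1).
have bnd w : etilde gamma E I F T i w <= (1 - gamma) * E i w + \sum_(t < K) G t w.
  have [t0 [It0 ->]] := key w.
  have Ep : 0 <= (1 - gamma) * E i w by apply: mulr_ge0; [rewrite subr_ge0|].
  rewrite (bigD1 t0) //=.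
  have : 0 <= \sum_(t < K | t != t0) G t w by apply: sumr_ge0.
  have := G0 t0 w.
  case hT: (T t0 w).
    lra.
  have -> : G t0 w = F t0 w by rewrite /G It0 eqxx hT.
  lra.
have mEi : measurable_fun setT (fun w => ((1 - gamma) * E i w)%:E).
  by apply/measurable_EFinP; apply: measurable_funM => //; exact: measurable_cst.
have mGE t : measurable_fun setT (fun w => (G t w)%:E) by exact/measurable_EFinP.
apply: (@le_trans _ _ (\int[P]_w (((1 - gamma) * E i w)%:E + \sum_(t < K) (G t w)%:E))%E).
  apply: ge0_le_integral => //.
  - by move=> w _; rewrite lee_fin.
  - apply: emeasurable_funD => //; exact: emeasurable_sum.
  - by move=> w _; rewrite sumEFin -EFinD lee_fin.
rewrite ge0_integralD //; last 3 first.
  - by move=> w _; rewrite lee_fin; apply: mulr_ge0; [rewrite subr_ge0|].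
  - by move=> w _; rewrite sume_ge0 // => t _; rewrite lee_fin.
  - exact: emeasurable_sum.
rewrite ge0_integral_sum //; last by move=> t w _; rewrite lee_fin.
have s1 w : \sum_(t < K) a t w = 1.
  have [t0 Ht0] := uniq w.
  rewrite (bigD1 t0) //= big1 => [|t tt0]; rewrite /a Ht0 ?eqxx ?(negbTE tt0) ?addr0 //.
have hA : (\sum_(t < K) \int[P]_w (G t w)%:E <= gamma%:E)%E.
  apply: (@le_trans _ _ (\sum_(t < K) \int[P]_w (gamma * a t w)%:E)%E).
    by apply: lee_sum => t _; exact: kt.
  rewrite -ge0_integral_sum //; last 2 first.
  - by move=> t; apply/measurable_EFinP; apply: measurable_funM => //; exact: measurable_cst.
  - by move=> t w _; rewrite lee_fin; apply: mulr_ge0; [exact: ltW|rewrite /a ler0n].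
  rewrite (eq_integral (cst gamma%:E)); last first.
    by move=> w _; rewrite sumEFin -mulr_sumr s1 mulr1.
  by rewrite integral_cst // [X in (_ * X <= _)%E]probability_setT mule1.
have hE : (\int[P]_w ((1 - gamma) * E i w)%:E <= (1 - gamma)%:E)%E.
  under eq_integral do rewrite EFinM.
  rewrite ge0_integralZl //; last 3 first.
  - exact/measurable_EFinP.
  - by move=> w _; rewrite lee_fin.
  - by rewrite lee_fin subr_ge0.
  rewrite -[X in (_ <= X)%E]mule1; apply: lee_wpmul2l; [by rewrite lee_fin subr_ge0|exact: hEnull].
apply: le_trans (leeD hE hA) _.
by rewrite -EFinD subrK.
Qed.
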